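(* Let $\widetilde\nabla$ be the canonical snm-connection on $\mathbb R^3$ determined by $\mathsf C=\partial_z$, and let $M$ be the rotational surface $\psi(s,t)=(x(s)\cos t,x(s)\sin t,z(s))$, $s\in I$, $t\in\mathbb R$, with $I$ an open interval, $x>0$, $x'^2+z'^2=1$, whose generating curve $s\mapsto(x(s),z(s))$ is a segment of a straight line. If the sectional curvature $K$ of $M$ with respect to $\widetilde\nabla$ is constant, then either $x$ is constant (so $M$ is part of a circular cylinder about the $z$-axis) and $K=\tfrac12$, or $z$ is constant (so $M$ is part of a horizontal plane) and $K=0$.
   Context: Let $\langle\cdot,\cdot\rangle$ be the Euclidean metric on $\mathbb R^3$ and $\widetilde\nabla^0$ its Levi-Civita connection (the ordinary directional derivative). Given a smooth vector field $\mathsf C$ on $\mathbb R^3$, the semi-symmetric non-metric connection (snm-connection) determined by $\mathsf C$ is $\widetilde\nabla_XY=\widetilde\nabla^0_XY+\langle \mathsf C,Y\rangle X$. Its curvature tensor is $\widetilde R(X,Y)Z=\widetilde\nabla_X\widetilde\nabla_YZ-\widetilde\nabla_Y\widetilde\nabla_XZ-\widetilde\nabla_{[X,Y]}Z$. For a surface $M$ immersed in $\mathbb R^3$, the induced connection is $\nabla_XY=(\widetilde\nabla_XY)^{\top}$ (tangential component), with curvature tensor $R$ defined by the same formula, and the sectional curvature of $M$ with respect to $\widetilde\nabla$ at $p$ is $K(p)=\frac12\big(\langle R(e_1,e_2)e_2,e_1\rangle+\langle R(e_2,e_1)e_1,e_2\rangle\big)$ for an orthonormal basis $\{e_1,e_2\}$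 of $T_pM$. *)

(* Defs.v *)
From Stdlib Require Import Reals Lra.
From Coquelicot Require Import Coquelicot.
Open Scope R_scope.

Definition R3 := (R * R * R)%type.
Definition vx (u : R3) : R := fst (fst u).
Definition vy (u : R3) : R := snd (fst u).
Definition vz (u : R3) : R := snd u.
Definition vadd (u v : R3) : R3 := (vx u + vx v, vy u + vy v, vz u + vz v).
Definition vscal (a : R) (u : R3) : R3 := (a * vx u, a * vy u, a * vz u).
Definition dot (u v : R3) : R := vx u * vx v + vy u * vy v + vz u * vz v.

Definition pd_s (f : R * R -> R) (p : R * R) : R :=
  Derive (fun u => f (u, snd p)) (fst p).
Definition pd_t (f : R * R -> R) (p : R * R) : R :=
  Derive (fun u => f (fst p, u)) (snd p).
Definition pdV_s (F : R * R -> R3) (p : R * R) : R3 :=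
  (pd_s (fun q => vx (F q)) p, pd_s (fun q => vy (F q)) p, pd_s (fun q => vz (F q)) p).
Definition pdV_t (F : R * R -> R3) (p : R * R) : R3 :=
  (pd_t (fun q => vx (F q)) p, pd_t (fun q => vy (F q)) p, pd_t (fun q => vz (F q)) p).

Section Surface.
Variable psi : R * R -> R3.

Definition psi_s (p : R * R) : R3 := pdV_s psi p.
Definition psi_t (p : R * R) : R3 := pdV_t psi p.

(* A tangent vector field on M is given by its coefficients (a,b) w.r.t.
   the coordinate frame (psi_s, psi_t); its value in R^3 is a psi_s + b psi_t. *)
Definition TField := (R * R -> R * R)%type.
Definition vec (X : TField) (p : R * R) : R3 :=
  vadd (vscal (fst (X p)) (psi_s p)) (vscal (snd (X p)) (psi_t p)).

Definition dirf (X : TField) (f : R * R -> R) (p : R * R) : R :=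
  fst (X p) * pd_s f p + snd (X p) * pd_t f p.
(* ambient directional derivative (Levi-Civita of R^3) of an R^3-valued
   field along M in the direction X *)
Definition dirV (X : TField) (F : R * R -> R3) (p : R * R) : R3 :=
  (dirf X (fun q => vx (F q)) p, dirf X (fun q => vy (F q)) p,
   dirf X (fun q => vz (F q)) p).

(* coefficients (w.r.t. psi_s, psi_t) of the tangential (orthogonal
   projection) component W^T of W in T_pM *)
Definition tcoord (W : R3) (p : R * R) : R * R :=
  let g11 := dot (psi_s p) (psi_s p) in
  let g12 := dot (psi_s p) (psi_t p) in
  let g22 := dot (psi_t p) (psi_t p) in
  let w1 := dot W (psi_s p) in
  let w2 := dot W (psi_t p) in
  let det := g11 * g22 - g12 * g12 in
  ((g22 * w1 - g12 * w2) / det, (g11 * w2 - g12 * w1) / det).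

Definition fsub (X Y : TField) : TField :=
  fun p => (fst (X p) - fst (Y p), snd (X p) - snd (Y p)).

Definition bracket (X Y : TField) : TField :=
  fun p => (dirf X (fun q => fst (Y q)) p - dirf Y (fun q => fst (X q)) p,
            dirf X (fun q => snd (Y q)) p - dirf Y (fun q => snd (X q)) p).

(* C : smooth vector field on R^3 determining the snm-connection
   tnabla_X Y = tnabla0_X Y + <C,Y> X ; induced connection
   nabla_X Y = (tnabla_X Y)^T *)
Variable C : R3 -> R3.

Definition nabla (X Y : TField) : TField :=
  fun p => tcoord (vadd (dirV X (vec Y) p)
                        (vscal (dot (C (psi p)) (vec Y p)) (vec X p))) p.

Definition curv (X Y Z : TField) : TField :=
  fsub (fsub (nabla X (nabla Y Z)) (nabla Y (nabla X Z))) (nabla (bracket X Y) Z).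

(* orthonormal frame {e1,e2} of T_pM obtained by Gram-Schmidt from
   (psi_s, psi_t), as coefficient fields *)
Definition frameE1 : TField :=
  fun p => (/ sqrt (dot (psi_s p) (psi_s p)), 0).
Definition frameE2 : TField :=
  fun p =>
    let c := dot (psi_t p) (psi_s p) / dot (psi_s p) (psi_s p) in
    let w := vadd (psi_t p) (vscal (- c) (psi_s p)) in
    let n := sqrt (dot w w) in
    (- c / n, / n).

Definition sect_curv (p : R * R) : R :=
  / 2 * (dot (vec (curv frameE1 frameE2 frameE2) p) (vec frameE1 p)
       + dot (vec (curv frameE2 frameE1 frameE1) p) (vec frameE2 p)).

End Surface.

Definition Cz : R3 -> R3 := fun _ => (0, 0, 1).

Definition rot_surface (x z : R -> R) : R * R -> R3 :=
  fun p => (x (fst p) * cos (snd p), x (fst p) * sin (snd p), z (fst p)).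

Definition in_interval (a b : Rbar) (s : R) : Prop := Rbar_lt a s /\ Rbar_lt s b.

(* Main.v *)
Require Import Defs.
From Stdlib Require Import Reals Lra Nsatz.
From Coquelicot Require Import Coquelicot.
Open Scope R_scope.


Lemma loc_I a b s : in_interval a b s -> locally s (in_interval a b).
Proof.
  intros [H1 H2].
  assert (L1 := open_Rbar_gt' s a H1). assert (L2 := open_Rbar_lt' s b H2).
  simpl in L1, L2.
  exact (filter_and _ _ L1 L2).
Qed.

Lemma I_conv a b s1 s2 s : in_interval a b s1 -> in_interval a b s2 ->
  Rmin s1 s2 <= s <= Rmax s1 s2 -> in_interval a b s.
Proof.
  intros [H1 H2] [H3 H4] [H5 H6]; split.
  - destruct a as [a| |]; simpl in *; try tauto.
    unfold Rmin in H5; destruct (Rle_dec s1 s2); lra.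
  - destruct b as [b| |]; simpl in *; try tauto.
    unfold Rmax in H6; destruct (Rle_dec s1 s2); lra.
Qed.

Lemma deriv0_const a b f : (forall s, in_interval a b s -> is_derive f s 0) ->
  forall s1 s2, in_interval a b s1 -> in_interval a b s2 -> f s1 = f s2.
Proof.
  intros Hd s1 s2 H1 H2.
  destruct (MVT_gen f s1 s2 (fun _ => 0)) as [c [_ Hc]].
  - intros y Hy. apply Hd. apply (I_conv a b s1 s2); auto; lra.
  - intros y Hy. apply continuity_pt_filterlim.
    apply (ex_derive_continuous f y). exists 0. apply Hd.
    apply (I_conv a b s1 s2); auto.
  - lra.
Qed.

Lemma I_two a b : Rbar_lt a b -> exists s1 s2, in_interval a b s1 /\ in_interval a b s2 /\ s1 <> s2.
Proof.
  intros Hab.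
  assert (exists s0, in_interval a b s0) as [s0 Hs0].
  { destruct a as [a| |]; destruct b as [b| |]; simpl in Hab; try tauto.
    - exists ((a+b)/2); split; simpl; lra.
    - exists (a+1); split; simpl; auto; lra.
    - exists (b-1); split; simpl; auto; lra.
    - exists 0; split; simpl; auto. }
  destruct (loc_I a b s0 Hs0) as [eps Heps].
  exists s0, (s0 + eps/2). split; [exact Hs0|split].
  - apply Heps. unfold ball; simpl; unfold AbsRing_ball, abs, minus, plus, opp; simpl.
    replace (s0 + eps/2 + - s0) with (eps/2) by ring.
    destruct eps as [e He]; simpl. rewrite Rabs_right; lra.
  - destruct eps as [e He]; simpl. intro; lra.
Qed.


Ltac eta_fix := repeat match goal with |- context [Derive (fun y => ?f y) ?s] => change (Derive (fun y => f y) s) with (Derive f s) end.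

Lemma key_alg A B p q u v : (A <> 0 \/ B <> 0) -> A*p + B*q = 0 -> p^2 + q^2 = 1 ->
  p*u + q*v = 0 -> A*u + B*v = 0 -> u = 0 /\ v = 0.
Proof.
  intros HAB H1 H2 H3 H4.
  assert (Hd : u*q - v*p = 0).
  { assert (EA : A*(u*q - v*p) = 0).
    { replace (A*(u*q - v*p)) with (q*(A*u+B*v) - v*(A*p+B*q)) by ring. rewrite H1, H4; ring. }
    assert (EB : B*(u*q - v*p) = 0).
    { replace (B*(u*q - v*p)) with (u*(A*p+B*q) - p*(A*u+B*v)) by ring. rewrite H1, H4; ring. }
    destruct HAB as [HA|HB].
    - destruct (Rmult_integral _ _ EA); [contradiction|assumption].
    - destruct (Rmult_integral _ _ EB); [contradiction|assumption]. }
  split.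
  - replace u with (p*(p*u+q*v) + q*(u*q - v*p) - u*(p^2+q^2-1)) by ring. rewrite H3, Hd, H2; ring.
  - replace v with (q*(p*u+q*v) - p*(u*q - v*p) - v*(p^2+q^2-1)) by ring. rewrite H3, Hd, H2; ring.
Qed.

Lemma affine_xz a b (x z : R -> R) :
  Rbar_lt a b ->
  (forall n s, in_interval a b s -> ex_derive_n x n s) ->
  (forall n s, in_interval a b s -> ex_derive_n z n s) ->
  (forall s, in_interval a b s -> (Derive x s) ^ 2 + (Derive z s) ^ 2 = 1) ->
  (exists A B c : R, (A <> 0 \/ B <> 0) /\
     forall s, in_interval a b s -> A * x s + B * z s = c) ->
  exists x0 al z0 be, al^2 + be^2 = 1 /\
    forall s, in_interval a b s -> x s = x0 + al*s /\ z s = z0 + be*s.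
Proof.
  intros Hab Hx Hz Hu [A [B [c [HAB Hl]]]].
  assert (Ex1 : forall s, in_interval a b s -> ex_derive x s) by (intros s Hs; exact (Hx 1%nat s Hs)).
  assert (Ez1 : forall s, in_interval a b s -> ex_derive z s) by (intros s Hs; exact (Hz 1%nat s Hs)).
  assert (Ex2 : forall s, in_interval a b s -> ex_derive (Derive x) s) by (intros s Hs; exact (Hx 2%nat s Hs)).
  assert (Ez2 : forall s, in_interval a b s -> ex_derive (Derive z) s) by (intros s Hs; exact (Hz 2%nat s Hs)).
  assert (D1 : forall s, in_interval a b s -> A * Derive x s + B * Derive z s = 0).
  { intros s Hs.
    assert (E : Derive (fun u => A * x u + B * z u) s = Derive (fun _ => c) s).
    { apply Derive_ext_loc. apply (filter_imp (in_interval a b)); [|apply loc_I; auto].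
      intros u Hu'; apply Hl; auto. }
    rewrite Derive_const in E. rewrite <- E. symmetry. apply is_derive_unique.
    auto_derive; [repeat split; auto|].
    eta_fix; ring. }
  assert (D2 : forall s, in_interval a b s -> Derive x s * Derive (Derive x) s + Derive z s * Derive (Derive z) s = 0).
  { intros s Hs.
    assert (E : Derive (fun u => (Derive x u)^2 + (Derive z u)^2) s = Derive (fun _ => 1) s).
    { apply Derive_ext_loc. apply (filter_imp (in_interval a b)); [|apply loc_I; auto].
      intros u Hu'; apply Hu; auto. }
    rewrite Derive_const in E.
    assert (E2 : Derive (fun u => (Derive x u)^2 + (Derive z u)^2) s = 2 * (Derive x s * Derive (Derive x) s + Derive z s * Derive (Derive z) s)).
    { apply is_derive_unique.
      auto_derive; [repeat split; auto|]. eta_fix; ring. }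
    lra. }
  assert (D3 : forall s, in_interval a b s -> A * Derive (Derive x) s + B * Derive (Derive z) s = 0).
  { intros s Hs.
    assert (E : Derive (fun u => A * Derive x u + B * Derive z u) s = Derive (fun _ => 0) s).
    { apply Derive_ext_loc. apply (filter_imp (in_interval a b)); [|apply loc_I; auto].
      intros u Hu'; apply D1; auto. }
    rewrite Derive_const in E. rewrite <- E. symmetry. apply is_derive_unique.
    auto_derive; [repeat split; auto|]. eta_fix; ring. }
  assert (D0 : forall s, in_interval a b s -> Derive (Derive x) s = 0 /\ Derive (Derive z) s = 0).
  { intros s Hs. apply (key_alg A B (Derive x s) (Derive z s)); auto. }
  destruct (I_two a b Hab) as [s0 [_ [Hs0 _]]].
  set (al := Derive x s0). set (be := Derive z s0).
  assert (Cx : forall s, in_interval a b s -> Derive x s = al).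
  { intros s Hs. apply (deriv0_const a b (Derive x)); auto.
    intros y Hy. rewrite <- (proj1 (D0 y Hy)). apply Derive_correct; auto. }
  assert (Cz' : forall s, in_interval a b s -> Derive z s = be).
  { intros s Hs. apply (deriv0_const a b (Derive z)); auto.
    intros y Hy. rewrite <- (proj2 (D0 y Hy)). apply Derive_correct; auto. }
  exists (x s0 - al * s0), al, (z s0 - be * s0), be. split.
  { rewrite <- (Cx s0 Hs0), <- (Cz' s0 Hs0). apply Hu; auto. }
  intros s Hs. split.
  - assert (E : x s - al * s = x s0 - al * s0); [|lra].
    apply (deriv0_const a b (fun u => x u - al * u)); auto.
    intros y Hy. replace 0 with (Derive x y - al * 1) by (rewrite Cx; auto; ring).
    apply (is_derive_minus x (fun u => al * u)). apply Derive_correct; auto.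
    apply is_derive_scal. apply (is_derive_id y).
  - assert (E : z s - be * s = z s0 - be * s0); [|lra].
    apply (deriv0_const a b (fun u => z u - be * u)); auto.
    intros y Hy. replace 0 with (Derive z y - be * 1) by (rewrite Cz'; auto; ring).
    apply (is_derive_minus z (fun u => be * u)). apply Derive_correct; auto.
    apply is_derive_scal. apply (is_derive_id y).
Qed.


Definition HypC a b (x z : R -> R) al be :=
  al^2 + be^2 = 1 /\ (forall s, in_interval a b s -> is_derive x s al) /\
  (forall s, in_interval a b s -> is_derive z s be) /\ (forall s, in_interval a b s -> 0 < x s).

Lemma PS a b x z al be s t : HypC a b x z al be -> in_interval a b s ->
  psi_s (rot_surface x z) (s,t) = (al*cos t, al*sin t, be).
Proof.
  intros [H0 [Hx [Hz Hp]]] Hs.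
  unfold psi_s, pdV_s, pd_s; simpl. f_equal; [f_equal|].
  - apply is_derive_unique. unfold vx, rot_surface; simpl.
    auto_derive; [exists al; auto|]. eta_fix. rewrite (is_derive_unique _ _ _ (Hx s Hs)); ring.
  - apply is_derive_unique. unfold vy, rot_surface; simpl.
    auto_derive; [exists al; auto|]. eta_fix. rewrite (is_derive_unique _ _ _ (Hx s Hs)); ring.
  - apply is_derive_unique. unfold vz, rot_surface; simpl. apply Hz; auto.
Qed.

Lemma PT x z s t : psi_t (rot_surface x z) (s,t) = (- (x s * sin t), x s * cos t, 0).
Proof.
  unfold psi_t, pdV_t, pd_t; simpl. f_equal; [f_equal|].
  - apply is_derive_unique. unfold vx, rot_surface; simpl. auto_derive; auto. ring.
  - apply is_derive_unique. unfold vy, rot_surface; simpl. auto_derive; auto. ring.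
  - apply is_derive_unique. unfold vz, rot_surface; simpl. auto_derive; auto.
Qed.

Lemma pd_s_loc a b f g p : in_interval a b (fst p) ->
  (forall q, in_interval a b (fst q) -> f q = g q) -> pd_s f p = pd_s g p.
Proof.
  intros Hp H. unfold pd_s. apply Derive_ext_loc.
  apply (filter_imp (in_interval a b)); [|apply loc_I; auto].
  intros u Hu. apply H. simpl. auto.
Qed.

Lemma pd_t_loc a b f g p : in_interval a b (fst p) ->
  (forall q, in_interval a b (fst q) -> f q = g q) -> pd_t f p = pd_t g p.
Proof.
  intros Hp H. unfold pd_t. apply Derive_ext.
  intros u. apply H. simpl. auto.
Qed.

Lemma tcoord_eval psi W p Ps Pt r : psi_s psi p = Ps -> psi_t psi p = Pt ->
  dot Ps Ps = 1 -> dot Ps Pt = 0 -> dot Pt Pt = r^2 -> r <> 0 ->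
  tcoord psi W p = (dot W Ps, dot W Pt / r^2).
Proof.
  intros H1 H2 H3 H4 H5 H6. unfold tcoord. rewrite H1, H2, H3, H4, H5.
  f_equal; field; auto.
Qed.



Ltac exd Ha Hb Hx Hs := repeat match goal with |- _ /\ _ => split end; match goal with
  | |- True => exact I
  | |- ex_derive _ _ => first [eexists; apply Ha | eexists; apply Hb | eexists; apply (Hx _ Hs)]
  end.

Lemma nabla_gen a b x z al be (X Y : TField) a2 b2 da2 db2 s t :
  HypC a b x z al be -> in_interval a b s ->
  (forall q, in_interval a b (fst q) -> Y q = (a2 (fst q), b2 (fst q))) ->
  is_derive a2 s da2 -> is_derive b2 s db2 ->
  nabla (rot_surface x z) Cz X Y (s,t) =
  (fst (X (s,t)) * da2 - x s * al * snd (X (s,t)) * b2 s + be * a2 s * fst (X (s,t)),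
   fst (X (s,t)) * db2 + al / x s * (a2 s * snd (X (s,t)) + b2 s * fst (X (s,t))) + be * a2 s * snd (X (s,t))).
Proof.
  intros HC Hs HY Ha Hb. pose proof HC as [H0 [Hx [Hz Hp]]].
  assert (Dx : Derive x s = al) by (apply is_derive_unique; auto).
  assert (VY : forall q, in_interval a b (fst q) -> vec (rot_surface x z) Y q =
     (a2 (fst q)*al*cos (snd q) - b2 (fst q) * x (fst q) * sin (snd q),
      a2 (fst q)*al*sin (snd q) + b2 (fst q) * x (fst q) * cos (snd q), a2 (fst q)*be)).
  { intros [s' t'] Hq. simpl in Hq. unfold vec. rewrite (PS a b x z al be s' t' HC Hq), PT, (HY (s',t') Hq).
    unfold vadd, vscal, vx, vy, vz; simpl. f_equal; [f_equal|]; ring. }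
  assert (D1 : pd_s (fun q => vx (vec (rot_surface x z) Y q)) (s,t) =
     da2*al*cos t - (db2 * x s + b2 s * al)*sin t).
  { rewrite (pd_s_loc a b _ (fun q => a2 (fst q)*al*cos (snd q) - b2 (fst q) * x (fst q) * sin (snd q)));
      [| simpl; auto | intros q Hq; rewrite VY; auto].
    unfold pd_s; simpl. apply is_derive_unique. auto_derive; [split; [exists da2; apply Ha| split; [exists db2; apply Hb | split; [exists al; apply (Hx s Hs) | exact I]]] |].
    eta_fix. rewrite (is_derive_unique _ _ _ Ha), (is_derive_unique _ _ _ Hb), Dx. ring. }
  assert (D2 : pd_s (fun q => vy (vec (rot_surface x z) Y q)) (s,t) =
     da2*al*sin t + (db2 * x s + b2 s * al)*cos t).
  { rewrite (pd_s_loc a b _ (fun q => a2 (fst q)*al*sin (snd q) + b2 (fst q) * x (fst q) * cos (snd q)));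
      [| simpl; auto | intros q Hq; rewrite VY; auto].
    unfold pd_s; simpl. apply is_derive_unique. auto_derive; [split; [exists da2; apply Ha| split; [exists db2; apply Hb | split; [exists al; apply (Hx s Hs) | exact I]]] |].
    eta_fix. rewrite (is_derive_unique _ _ _ Ha), (is_derive_unique _ _ _ Hb), Dx. ring. }
  assert (D3 : pd_s (fun q => vz (vec (rot_surface x z) Y q)) (s,t) = da2*be).
  { rewrite (pd_s_loc a b _ (fun q => a2 (fst q)*be));
      [| simpl; auto | intros q Hq; rewrite VY; auto].
    unfold pd_s; simpl. rewrite Derive_scal_l, (is_derive_unique _ _ _ Ha). ring. }
  assert (T1 : pd_t (fun q => vx (vec (rot_surface x z) Y q)) (s,t) =
     - (a2 s*al*sin t) - b2 s * x s * cos t).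
  { rewrite (pd_t_loc a b _ (fun q => a2 (fst q)*al*cos (snd q) - b2 (fst q) * x (fst q) * sin (snd q)));
      [| simpl; auto | intros q Hq; rewrite VY; auto].
    unfold pd_t; simpl. apply is_derive_unique. auto_derive; auto. ring. }
  assert (T2 : pd_t (fun q => vy (vec (rot_surface x z) Y q)) (s,t) =
     a2 s*al*cos t - b2 s * x s * sin t).
  { rewrite (pd_t_loc a b _ (fun q => a2 (fst q)*al*sin (snd q) + b2 (fst q) * x (fst q) * cos (snd q)));
      [| simpl; auto | intros q Hq; rewrite VY; auto].
    unfold pd_t; simpl. apply is_derive_unique. auto_derive; auto. ring. }
  assert (T3 : pd_t (fun q => vz (vec (rot_surface x z) Y q)) (s,t) = 0).
  { rewrite (pd_t_loc a b _ (fun q => a2 (fst q)*be));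
      [| simpl; auto | intros q Hq; rewrite VY; auto].
    unfold pd_t; simpl. apply Derive_const. }
  unfold nabla, dirV, dirf. rewrite D1, D2, D3, T1, T2, T3.
  rewrite (VY (s,t) Hs). unfold vec. rewrite (PS a b x z al be s t HC Hs), PT.
  destruct (X (s,t)) as [a1 b1]. simpl.
  assert (Hxs := Hp s Hs).
  assert (Htr : cos t * cos t + sin t * sin t = 1) by (pose proof (sin2_cos2 t) as HH; unfold Rsqr in HH; lra).
  rewrite (tcoord_eval _ _ _ _ _ (x s) (PS a b x z al be s t HC Hs) (PT x z s t)).
  2:{ unfold dot, vx, vy, vz; simpl. clear - H0 Htr. cbn [pow] in *. nsatz. }
  2:{ unfold dot, vx, vy, vz; simpl. ring. }
  2:{ unfold dot, vx, vy, vz; simpl. clear - H0 Htr. cbn [pow] in *. nsatz. }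
  2:{ lra. }
  assert (Hi : / (x s ^ 2) = / x s * / x s) by (field; lra).
  unfold Rdiv. rewrite Hi. set (ix := / x s).
  unfold Cz, dot, vadd, vscal, vx, vy, vz; simpl.
  assert (Hix : x s * ix = 1) by (unfold ix; field; lra).
  clear - H0 Htr Hix. cbn [pow] in *. f_equal; nsatz.
Qed.


Lemma bracket_gen a b (X Y : TField) a1 b1 a2 b2 da1 db1 da2 db2 s t :
  in_interval a b s ->
  (forall q, in_interval a b (fst q) -> X q = (a1 (fst q), b1 (fst q))) ->
  (forall q, in_interval a b (fst q) -> Y q = (a2 (fst q), b2 (fst q))) ->
  is_derive a1 s da1 -> is_derive b1 s db1 -> is_derive a2 s da2 -> is_derive b2 s db2 ->
  Defs.bracket X Y (s,t) = (a1 s * da2 - a2 s * da1, a1 s * db2 - a2 s * db1).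
Proof.
  intros Hs HX HY H1 H2 H3 H4. unfold Defs.bracket, dirf.
  rewrite (pd_s_loc a b (fun q => fst (Y q)) (fun q => a2 (fst q))); [|exact Hs|intros q Hq; rewrite HY; auto].
  rewrite (pd_s_loc a b (fun q => snd (Y q)) (fun q => b2 (fst q))); [|exact Hs|intros q Hq; rewrite HY; auto].
  rewrite (pd_s_loc a b (fun q => fst (X q)) (fun q => a1 (fst q))); [|exact Hs|intros q Hq; rewrite HX; auto].
  rewrite (pd_s_loc a b (fun q => snd (X q)) (fun q => b1 (fst q))); [|exact Hs|intros q Hq; rewrite HX; auto].
  rewrite (pd_t_loc a b (fun q => fst (Y q)) (fun q => a2 (fst q))); [|exact Hs|intros q Hq; rewrite HY; auto].
  rewrite (pd_t_loc a b (fun q => snd (Y q)) (fun q => b2 (fst q))); [|exact Hs|intros q Hq; rewrite HY; auto].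
  rewrite (pd_t_loc a b (fun q => fst (X q)) (fun q => a1 (fst q))); [|exact Hs|intros q Hq; rewrite HX; auto].
  rewrite (pd_t_loc a b (fun q => snd (X q)) (fun q => b1 (fst q))); [|exact Hs|intros q Hq; rewrite HX; auto].
  unfold pd_s, pd_t; simpl. rewrite !Derive_const. eta_fix.
  rewrite (is_derive_unique _ _ _ H1), (is_derive_unique _ _ _ H2), (is_derive_unique _ _ _ H3),
    (is_derive_unique _ _ _ H4).
  rewrite (HX (s,t) Hs), (HY (s,t) Hs). simpl. f_equal; ring.
Qed.

Lemma E1_val a b x z al be q : HypC a b x z al be -> in_interval a b (fst q) ->
  frameE1 (rot_surface x z) q = (1, 0).
Proof.
  intros HC Hq. pose proof HC as [H0 [Hx [Hz Hp]]]. destruct q as [s t]. simpl in Hq.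
  unfold frameE1. rewrite (PS a b x z al be s t HC Hq).
  assert (E : dot (al * cos t, al * sin t, be) (al * cos t, al * sin t, be) = 1).
  { unfold dot, vx, vy, vz; simpl.
    assert (Htr : cos t * cos t + sin t * sin t = 1) by (pose proof (sin2_cos2 t) as HH; unfold Rsqr in HH; lra).
    clear - H0 Htr. cbn [pow] in *. nsatz. }
  rewrite E, sqrt_1, Rinv_1. reflexivity.
Qed.

Lemma E2_val a b x z al be q : HypC a b x z al be -> in_interval a b (fst q) ->
  frameE2 (rot_surface x z) q = (0, / x (fst q)).
Proof.
  intros HC Hq. pose proof HC as [H0 [Hx [Hz Hp]]]. destruct q as [s t]. simpl in Hq.
  unfold frameE2. rewrite (PS a b x z al be s t HC Hq), PT.
  assert (Htr : cos t * cos t + sin t * sin t = 1) by (pose proof (sin2_cos2 t) as HH; unfold Rsqr in HH; lra).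
  assert (E : dot (al * cos t, al * sin t, be) (al * cos t, al * sin t, be) = 1).
  { unfold dot, vx, vy, vz; simpl. clear - H0 Htr. cbn [pow] in *. nsatz. }
  assert (E' : dot (- (x s * sin t), x s * cos t, 0) (al * cos t, al * sin t, be) = 0).
  { unfold dot, vx, vy, vz; simpl. ring. }
  rewrite E, E'.
  assert (E'' : vadd (- (x s * sin t), x s * cos t, 0) (vscal (- (0 / 1)) (al * cos t, al * sin t, be))
     = (- (x s * sin t), x s * cos t, 0)).
  { unfold vadd, vscal, vx, vy, vz; simpl. f_equal; [f_equal|]; field. }
  rewrite E''.
  assert (E3 : dot (- (x s * sin t), x s * cos t, 0) (- (x s * sin t), x s * cos t, 0) = x s ^ 2).
  { unfold dot, vx, vy, vz; simpl. clear - Htr. cbn [pow] in *. nsatz. }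
  rewrite E3, sqrt_pow2 by (left; apply Hp; auto). simpl. f_equal. field. specialize (Hp s Hq). lra.
Qed.


Ltac side Hx Hs := repeat match goal with |- _ /\ _ => split end;
  match goal with
  | |- True => exact I
  | |- ex_derive _ _ => eexists; apply (Hx _ Hs)
  | |- _ <> 0 => lra
  end.

Ltac dtac Hx Hs Hxs Dx := auto_derive; [side Hx Hs | eta_fix; rewrite Dx; field; lra].


Lemma N11 a b x z al be s t : HypC a b x z al be -> in_interval a b s ->
  nabla (rot_surface x z) Cz (frameE1 (rot_surface x z)) (frameE1 (rot_surface x z)) (s,t) = (be, 0).
Proof.
  intros HC Hs. pose proof HC as [H0 [Hx [Hz Hp]]].
  rewrite (nabla_gen a b x z al be _ _ (fun _ => 1) (fun _ => 0) 0 0 s t HC Hs).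
  - rewrite (E1_val a b x z al be (s,t) HC Hs). simpl. f_equal; field. specialize (Hp s Hs); lra.
  - intros q Hq. rewrite (E1_val a b x z al be q HC Hq). reflexivity.
  - auto_derive; auto.
  - auto_derive; auto.
Qed.

Lemma N12 a b x z al be s t : HypC a b x z al be -> in_interval a b s ->
  nabla (rot_surface x z) Cz (frameE1 (rot_surface x z)) (frameE2 (rot_surface x z)) (s,t) = (0, 0).
Proof.
  intros HC Hs. pose proof HC as [H0 [Hx [Hz Hp]]].
  assert (Hxs := Hp s Hs). assert (Dx : Derive x s = al) by (apply is_derive_unique; auto).
  rewrite (nabla_gen a b x z al be _ _ (fun _ => 0) (fun u => / x u) 0 (- al * (/ x s * / x s)) s t HC Hs).
  - rewrite (E1_val a b x z al be (s,t) HC Hs). simpl. f_equal; field; lra.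
  - intros q Hq. rewrite (E2_val a b x z al be q HC Hq). reflexivity.
  - auto_derive; auto.
  - dtac Hx Hs Hxs Dx.
Qed.

Lemma N22 a b x z al be s t : HypC a b x z al be -> in_interval a b s ->
  nabla (rot_surface x z) Cz (frameE2 (rot_surface x z)) (frameE2 (rot_surface x z)) (s,t) = (- al * / x s, 0).
Proof.
  intros HC Hs. pose proof HC as [H0 [Hx [Hz Hp]]].
  assert (Hxs := Hp s Hs). assert (Dx : Derive x s = al) by (apply is_derive_unique; auto).
  rewrite (nabla_gen a b x z al be _ _ (fun _ => 0) (fun u => / x u) 0 (- al * (/ x s * / x s)) s t HC Hs).
  - rewrite (E2_val a b x z al be (s,t) HC Hs). simpl. f_equal; field; lra.
  - intros q Hq. rewrite (E2_val a b x z al be q HC Hq). reflexivity.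
  - auto_derive; auto.
  - dtac Hx Hs Hxs Dx.
Qed.

Lemma N21 a b x z al be s t : HypC a b x z al be -> in_interval a b s ->
  nabla (rot_surface x z) Cz (frameE2 (rot_surface x z)) (frameE1 (rot_surface x z)) (s,t) =
  (0, al * (/ x s * / x s) + be * / x s).
Proof.
  intros HC Hs. pose proof HC as [H0 [Hx [Hz Hp]]].
  assert (Hxs := Hp s Hs).
  rewrite (nabla_gen a b x z al be _ _ (fun _ => 1) (fun _ => 0) 0 0 s t HC Hs).
  - rewrite (E2_val a b x z al be (s,t) HC Hs). simpl. f_equal; field; lra.
  - intros q Hq. rewrite (E1_val a b x z al be q HC Hq). reflexivity.
  - auto_derive; auto.
  - auto_derive; auto.
Qed.

Lemma sect_val a b x z al be s t : HypC a b x z al be -> in_interval a b s ->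
  sect_curv (rot_surface x z) Cz (s,t) = (be * be - al * be * / x s) / 2.
Proof.
  intros HC Hs. pose proof HC as [H0 [Hx [Hz Hp]]].
  assert (Hxs := Hp s Hs). assert (Dx : Derive x s = al) by (apply is_derive_unique; auto).
  unfold sect_curv, curv, fsub, vec.
  rewrite (nabla_gen a b x z al be (frameE1 (rot_surface x z)) (nabla (rot_surface x z) Cz (frameE2 (rot_surface x z)) (frameE2 (rot_surface x z)))
     (fun u => - al * / x u) (fun _ => 0) (al * al * (/ x s * / x s)) 0 s t HC Hs);
    [| intros q Hq; destruct q as [s' t']; apply (N22 a b x z al be s' t' HC Hq)
     | dtac Hx Hs Hxs Dx | auto_derive; auto].
  rewrite (nabla_gen a b x z al be (frameE2 (rot_surface x z)) (nabla (rot_surface x z) Cz (frameE1 (rot_surface x z)) (frameE2 (rot_surface x z)))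
     (fun _ => 0) (fun _ => 0) 0 0 s t HC Hs);
    [| intros q Hq; destruct q as [s' t']; apply (N12 a b x z al be s' t' HC Hq)
     | auto_derive; auto | auto_derive; auto].
  rewrite (nabla_gen a b x z al be (Defs.bracket (frameE1 (rot_surface x z)) (frameE2 (rot_surface x z))) (frameE2 (rot_surface x z))
     (fun _ => 0) (fun u => / x u) 0 (- al * (/ x s * / x s)) s t HC Hs);
    [| intros q Hq; apply (E2_val a b x z al be q HC Hq)
     | auto_derive; auto | dtac Hx Hs Hxs Dx].
  rewrite (nabla_gen a b x z al be (frameE2 (rot_surface x z)) (nabla (rot_surface x z) Cz (frameE1 (rot_surface x z)) (frameE1 (rot_surface x z)))
     (fun _ => be) (fun _ => 0) 0 0 s t HC Hs);
    [| intros q Hq; destruct q as [s' t']; apply (N11 a b x z al be s' t' HC Hq)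
     | auto_derive; auto | auto_derive; auto].
  rewrite (nabla_gen a b x z al be (frameE1 (rot_surface x z)) (nabla (rot_surface x z) Cz (frameE2 (rot_surface x z)) (frameE1 (rot_surface x z)))
     (fun _ => 0) (fun u => al * (/ x u * / x u) + be * / x u) 0
     (-2*al*al*(/x s*/x s*/x s) - al*be*(/x s*/x s)) s t HC Hs);
    [| intros q Hq; destruct q as [s' t']; apply (N21 a b x z al be s' t' HC Hq)
     | auto_derive; auto | dtac Hx Hs Hxs Dx].
  rewrite (nabla_gen a b x z al be (Defs.bracket (frameE2 (rot_surface x z)) (frameE1 (rot_surface x z))) (frameE1 (rot_surface x z))
     (fun _ => 1) (fun _ => 0) 0 0 s t HC Hs);
    [| intros q Hq; apply (E1_val a b x z al be q HC Hq)
     | auto_derive; auto | auto_derive; auto].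
  rewrite (bracket_gen a b (frameE1 (rot_surface x z)) (frameE2 (rot_surface x z)) (fun _ => 1) (fun _ => 0) (fun _ => 0) (fun u => / x u)
     0 0 0 (- al * (/ x s * / x s)) s t Hs);
    [| intros q Hq; apply (E1_val a b x z al be q HC Hq) | intros q Hq; apply (E2_val a b x z al be q HC Hq)
     | auto_derive; auto | auto_derive; auto | auto_derive; auto | dtac Hx Hs Hxs Dx].
  rewrite (bracket_gen a b (frameE2 (rot_surface x z)) (frameE1 (rot_surface x z)) (fun _ => 0) (fun u => / x u) (fun _ => 1) (fun _ => 0)
     0 (- al * (/ x s * / x s)) 0 0 s t Hs);
    [| intros q Hq; apply (E2_val a b x z al be q HC Hq) | intros q Hq; apply (E1_val a b x z al be q HC Hq)
     | auto_derive; auto | dtac Hx Hs Hxs Dx | auto_derive; auto | auto_derive; auto].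
  rewrite (E1_val a b x z al be (s,t) HC Hs), (E2_val a b x z al be (s,t) HC Hs).
  rewrite (PS a b x z al be s t HC Hs), PT.
  assert (Htr : cos t * cos t + sin t * sin t = 1) by (pose proof (sin2_cos2 t) as HH; unfold Rsqr in HH; lra).
  unfold Rdiv. set (ix := / x s).
  assert (Hix : x s * ix = 1) by (unfold ix; field; lra).
  unfold dot, vadd, vscal, vx, vy, vz; simpl.
  clear - H0 Htr Hix. cbn [pow] in *. nsatz.
Qed.


Theorem theorem4p3 (a b : Rbar) (x z : R -> R) :
  Rbar_lt a b ->
  (forall n s, in_interval a b s -> ex_derive_n x n s) ->
  (forall n s, in_interval a b s -> ex_derive_n z n s) ->
  (forall s, in_interval a b s -> 0 < x s) ->
  (forall s, in_interval a b s -> (Derive x s) ^ 2 + (Derive z s) ^ 2 = 1) ->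
  (exists A B c : R, (A <> 0 \/ B <> 0) /\
     forall s, in_interval a b s -> A * x s + B * z s = c) ->
  (exists K0 : R, forall s t, in_interval a b s ->
     sect_curv (rot_surface x z) Cz (s, t) = K0) ->
  ((exists c : R, forall s, in_interval a b s -> x s = c) /\
     (forall s t, in_interval a b s -> sect_curv (rot_surface x z) Cz (s, t) = / 2))
  \/
  ((exists c : R, forall s, in_interval a b s -> z s = c) /\
     (forall s t, in_interval a b s -> sect_curv (rot_surface x z) Cz (s, t) = 0)).
Proof.
  intros Hab Hx Hz Hp Hu Hl [K0 HK].
  destruct (affine_xz a b x z Hab Hx Hz Hu Hl) as [x0 [al [z0 [be [H0 Haff]]]]].
  assert (HC : HypC a b x z al be).
  { split; [exact H0|split; [|split]]; [| |exact Hp].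
    - intros s Hs.
      assert (D : Derive x s = al).
      { rewrite (Derive_ext_loc x (fun u => x0 + al * u)).
        - apply is_derive_unique. auto_derive; auto. ring.
        - apply (filter_imp (in_interval a b)); [|apply loc_I; auto].
          intros u Hu'. apply (Haff u Hu'). }
      rewrite <- D. apply Derive_correct. exact (Hx 1%nat s Hs).
    - intros s Hs.
      assert (D : Derive z s = be).
      { rewrite (Derive_ext_loc z (fun u => z0 + be * u)).
        - apply is_derive_unique. auto_derive; auto. ring.
        - apply (filter_imp (in_interval a b)); [|apply loc_I; auto].
          intros u Hu'. apply (Haff u Hu'). }
      rewrite <- D. apply Derive_correct. exact (Hz 1%nat s Hs). }
  destruct (Req_dec al 0) as [Ha0|Ha0].
  - left. split.
    + exists x0. intros s Hs. rewrite (proj1 (Haff s Hs)), Ha0. ring.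
    + intros s t Hs. rewrite (sect_val a b x z al be s t HC Hs), Ha0.
      assert (be * be = 1) by (rewrite Ha0 in H0; simpl in H0; lra). replace ((be * be - 0 * be * / x s) / 2) with ((be*be)/2) by (field; specialize (Hp s Hs); lra). rewrite H. field.
  - destruct (Req_dec be 0) as [Hb0|Hb0].
    + right. split.
      * exists z0. intros s Hs. rewrite (proj2 (Haff s Hs)), Hb0. ring.
      * intros s t Hs. rewrite (sect_val a b x z al be s t HC Hs), Hb0. field. specialize (Hp s Hs); lra.
    + exfalso.
      destruct (I_two a b Hab) as [s1 [s2 [H1 [H2 Hne]]]].
      assert (E := eq_trans (HK s1 0 H1) (eq_sym (HK s2 0 H2))).
      rewrite (sect_val a b x z al be s1 0 HC H1), (sect_val a b x z al be s2 0 HC H2) in E.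
      assert (P1 := Hp s1 H1). assert (P2 := Hp s2 H2).
      assert (E1 : al*be*/x s1 = al*be*/x s2) by lra.
      assert (E2 : al * be * (x s2 - x s1) = 0).
      { replace (al*be*(x s2 - x s1)) with ((al*be*/x s1 - al*be*/x s2) * (x s1 * x s2)) by (field; lra).
        rewrite E1; ring. }
      rewrite (proj1 (Haff s1 H1)), (proj1 (Haff s2 H2)) in E2.
      assert (al * be * al * (s2 - s1) = 0) by (rewrite <- E2; ring).
      apply Rmult_integral in H. destruct H as [H|H]; [|apply Hne; lra].
      apply Rmult_integral in H. destruct H as [H|H]; [|contradiction].
      apply Rmult_integral in H. destruct H as [H|H]; [apply Ha0 | apply Hb0]; assumption.
Qed.
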